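(* Let $(A;R)\in\mathcal C$, let $t:R\to A$ be a transversal with image $A\setminus Y$, and work in the matroid $PG(A;R)$. For each closed set $F$ let $\beta(F)=|\{x\in F\setminus Y: \mathrm{cl}(t^{-1}(x))=F\}|$. Then $\beta(F)=\alpha(F)$ for every closed set $F$ of $PG(A;R)$.
   Context: A set system is a pair $(A;R)$ where $R$ is a set of finite non-empty subsets of $A$; for $X\subseteq A$, $R[X]=\{r\in R: r\subseteq X\}$ and $\delta(X)=|X|-|R[X]|$. $\mathcal C$ is the class of finite set systems with $\delta(X)\ge0$ for all $X\subseteq A$. For $(A;R)\in\mathcal C$ define $d(X)=\min\{\delta(Y):X\subseteq Y\subseteq A\}$ and $\mathrm{cl}(X)=\{y: d(X\cup\{y\})=d(X)\}$; $PG(A;R)$ is the matroid $(A,\mathrm{cl})$ with rank function $d$. A transversal is an injective $t:R\to A$ with $t(r)\in r$ for all $r$. A closed set is $F$ with $\mathrm{cl}(F)=F$. The $\alpha$-function of a matroid is defined on unions of closed sets $X$ recursively by $\alpha(X)=|X|-d(X)-\sum_G\alpha(G)$, the sum over closed $G\subsetneq X$. *)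

(* Defs.v *)
From HB Require Import structures.
From mathcomp Require Import all_boot all_order all_algebra.
Set Implicit Arguments. Unset Strict Implicit. Unset Printing Implicit Defensive.
Import Order.TTheory GRing.Theory Num.Theory.
Local Open Scope ring_scope.

Definition set_system (A : finType) (R : {set {set A}}) : Prop :=
  set0 \notin R.

Definition Rin (A : finType) (R : {set {set A}}) (X : {set A}) : {set {set A}} :=
  [set r in R | r \subset X].

Definition delta (A : finType) (R : {set {set A}}) (X : {set A}) : int :=
  (#|X|%:Z - #|Rin R X|%:Z).

Definition in_C (A : finType) (R : {set {set A}}) : Prop :=
  set_system R /\ forall X : {set A}, 0 <= delta R X.

(* d(X) = min { delta(Y) : X \subset Y } ; setT is always such a Y. *)
Definition dR (A : finType) (R : {set {set A}}) (X : {set A}) : int :=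
  \big[Order.min/delta R setT]_(Y : {set A} | X \subset Y) delta R Y.

Definition clR (A : finType) (R : {set {set A}}) (X : {set A}) : {set A} :=
  [set y | dR R (y |: X) == dR R X].

Definition closedR (A : finType) (R : {set {set A}}) (F : {set A}) : bool :=
  clR R F == F.

(* alpha-function of PG(A;R) on closed sets (recursion with fuel; fuel
   #|X|.+1 suffices since proper subsets have strictly smaller cardinality):
   alpha(X) = |X| - d(X) - sum_{G closed, G proper subset of X} alpha(G). *)
Fixpoint alpha_aux (A : finType) (R : {set {set A}}) (n : nat) (X : {set A}) : int :=
  match n with
  | 0 => 0
  | n'.+1 => #|X|%:Z - dR R X
             - \sum_(G : {set A} | closedR R G && (G \proper X)) alpha_aux R n' G
  end.

Definition alphaR (A : finType) (R : {set {set A}}) (X : {set A}) : int :=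
  alpha_aux R #|X|.+1 X.

(* t : R -> A is a transversal (given as a function on all subsets, only its
   restriction to R matters). *)
Definition transversalR (A : finType) (R : {set {set A}}) (t : {set A} -> A) : Prop :=
  {in R &, injective t} /\ (forall r, r \in R -> t r \in r).

(* beta(F) = |{ x in F \ Y : cl(t^{-1}(x)) = F }| ; for x not in Y, t^{-1}(x)
   is the unique r in R with t r = x. *)
Definition betaR (A : finType) (R : {set {set A}}) (t : {set A} -> A)
    (Y F : {set A}) : nat :=
  #|[set x in F :\: Y | [exists r in R, (t r == x) && (clR R r == F)]]|.

(* Main.v *)
Require Import Defs.
From HB Require Import structures.
From mathcomp Require Import all_boot all_order all_algebra.
From mathcomp Require Import zify.
Import Order.TTheory GRing.Theory Num.Theory.
Local Open Scope ring_scope.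
Set Implicit Arguments. Unset Strict Implicit.

Section Aux.
Variables (A : finType) (R : {set {set A}}).

Lemma dR_le (X Y : {set A}) : X \subset Y -> dR R X <= delta R Y.
Proof.
move=> XY; rewrite /dR (bigD1 Y) //=.
by rewrite ge_min lexx.
Qed.

Lemma dR_ex (X : {set A}) : exists2 Y : {set A}, X \subset Y & dR R X = delta R Y.
Proof.
rewrite /dR; apply: (big_ind (fun v => exists2 Y : {set A}, X \subset Y & v = delta R Y)).
- by exists setT => //; apply: subsetT.
- move=> a b [Ya HYa ->] [Yb HYb ->].
  rewrite minElt; case: ifP => _; [by exists Ya | by exists Yb].
- by move=> Y XY; exists Y.
Qed.

Lemma dR_mono (X X' : {set A}) : X \subset X' -> dR R X <= dR R X'.
Proof.
move=> XX'; have [Y XY ->] := dR_ex X'.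
by apply: dR_le; apply: subset_trans XY.
Qed.

Lemma delta_sub (Y Z : {set A}) :
  delta R (Y :|: Z) + delta R (Y :&: Z) <= delta R Y + delta R Z.
Proof.
rewrite /delta.
have h1 := cardsUI Y Z.
have e1 : Rin R (Y :&: Z) = Rin R Y :&: Rin R Z.
  apply/setP => r; rewrite !inE subsetI.
  by case: (r \in R).
have s2 : Rin R Y :|: Rin R Z \subset Rin R (Y :|: Z).
  apply/subsetP => r; rewrite !inE => /orP [/andP [-> H] | /andP [-> H]] /=.
    by apply: subset_trans H (subsetUl _ _).
  by apply: subset_trans H (subsetUr _ _).
have h2 := cardsUI (Rin R Y) (Rin R Z).
have h3 := subset_leq_card s2.
rewrite e1.
lia.
Qed.

Lemma maxmin (X : {set A}) : exists M : {set A},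
  [/\ X \subset M, delta R M = dR R X &
      forall Z : {set A}, X \subset Z -> delta R Z = dR R X -> Z \subset M].
Proof.
have [Z0 XZ0 EZ0] := dR_ex X.
pose P (Z : {set A}) := (X \subset Z) && (delta R Z == dR R X).
have PZ0 : P Z0 by rewrite /P XZ0 EZ0 eqxx.
case: (@arg_maxnP _ Z0 P (fun Z => #|Z|) PZ0) => M /andP [XM /eqP EM] Mmax.
exists M; split => // Z XZ EZ.
have PU : P (Z :|: M).
  rewrite /P (subset_trans XM (subsetUr _ _)) /=.
  have h := delta_sub Z M.
  have h1 : dR R X <= delta R (Z :&: M) by apply: dR_le; rewrite subsetI XZ XM.
  have h2 : dR R X <= delta R (Z :|: M) by apply: dR_le; rewrite (subset_trans XM (subsetUr _ _)).
  rewrite eq_le h2 andbT.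
  rewrite EZ EM in h.
  lia.
have := Mmax _ PU => hc.
have : M == Z :|: M by rewrite eqEcard subsetUr; exact: hc.
move/eqP => ->; exact: subsetUl.
Qed.

Lemma clR_M (X M : {set A}) : X \subset M -> delta R M = dR R X ->
  (forall Z : {set A}, X \subset Z -> delta R Z = dR R X -> Z \subset M) ->
  clR R X = M.
Proof.
move=> XM EM Mmax; apply/setP => y; rewrite inE; apply/eqP/idP.
- move=> Ey; have [Z yXZ EZ] := dR_ex (y |: X).
  have XZ : X \subset Z by apply: subset_trans yXZ; apply: subsetUr.
  have := Mmax Z XZ; rewrite -EZ Ey => /(_ erefl) /subsetP; apply.
  by apply: (subsetP yXZ); rewrite setU11.
- move=> yM; apply/eqP; rewrite eq_le; apply/andP; split.
    rewrite -EM; apply: dR_le; by rewrite subUset sub1set yM XM.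
  by apply: dR_mono; apply: subsetUr.
Qed.

Lemma closed_delta (F : {set A}) : closedR R F -> delta R F = dR R F.
Proof.
move=> /eqP cF; have [M [FM EM Mmax]] := maxmin F.
by move: cF; rewrite (clR_M FM EM Mmax) => MF; subst M.
Qed.

Lemma closed_max (F Z : {set A}) : closedR R F -> F \subset Z ->
   delta R Z = dR R F -> Z \subset F.
Proof.
move=> cF; have [M [FM EM Mmax]] := maxmin F.
move/eqP: cF; rewrite (clR_M FM EM Mmax) => MF; subst M; exact: Mmax.
Qed.

Lemma cl_sub (X F : {set A}) : closedR R F -> X \subset F -> clR R X \subset F.
Proof.
move=> cF XF; have [M [XM EM Mmax]] := maxmin X.
rewrite (clR_M XM EM Mmax).
have h := delta_sub F M.
have h1 : dR R X <= delta R (F :&: M) by apply: dR_le; rewrite subsetI XF XM.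
have h2 : dR R F <= delta R (F :|: M) by apply: dR_le; apply: subsetUl.
have e := closed_delta cF.
have : F :|: M \subset F.
  apply: closed_max => //; first exact: subsetUl.
  rewrite -e in h2 *; apply/eqP; rewrite eq_le h2 andbT; lia.
by rewrite subUset => /andP [].
Qed.

Lemma cl_closed (X : {set A}) : closedR R (clR R X).
Proof.
have [M [XM EM Mmax]] := maxmin X.
rewrite /closedR (clR_M XM EM Mmax).
have dM : dR R M = dR R X.
  apply/eqP; rewrite eq_le (dR_mono XM) andbT -EM; exact: dR_le.
have [M' [MM' EM' Mmax']] := maxmin M.
rewrite (clR_M MM' EM' Mmax'); apply/eqP/eqP; rewrite eqEsubset MM' andbT.
apply: Mmax; first exact: subset_trans XM MM'.
by rewrite EM' dM.
Qed.

Lemma sub_cl (X : {set A}) : X \subset clR R X.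
Proof. by apply/subsetP => y yX; rewrite inE (setUidPr _) ?sub1set. Qed.


Lemma alpha_fuel n m (X : {set A}) : (#|X| < n)%N -> (#|X| < m)%N ->
  alpha_aux R n X = alpha_aux R m X.
Proof.
elim: n m X => [|n IH] [|m] X //= hn hm.
congr (_ - _); apply: eq_bigr => G /andP [_ GX]; apply: IH;
  have := proper_card GX; lia.
Qed.

Lemma alpha_rec (X : {set A}) : alphaR R X =
  #|X|%:Z - dR R X - \sum_(G : {set A} | closedR R G && (G \proper X)) alphaR R G.
Proof.
rewrite /alphaR /=; congr (_ - _); apply: eq_bigr => G /andP [_ GX].
transitivity (alphaR R G); last by [].
apply: alpha_fuel; have := proper_card GX; lia.
Qed.

Variables (t : {set A} -> A) (Y : {set A}).
Hypothesis tinj : {in R &, injective t}.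
Hypothesis tin : forall r, r \in R -> t r \in r.
Hypothesis himg : [set t r | r in R] = ~: Y.

Lemma beta_card (G : {set A}) :
  betaR R t Y G = #|[set r in R | clR R r == G]|.
Proof.
rewrite /betaR.
have -> : [set x in G :\: Y | [exists r in R, (t r == x) && (clR R r == G)]]
   = [set t r | r in [set r in R | clR R r == G]].
  apply/setP => x; rewrite !inE; apply/andP/imsetP.
  - case=> _ /existsP [r /andP [rR /andP [/eqP <- /eqP cr]]].
    by exists r => //; rewrite inE rR cr eqxx.
  - case=> r; rewrite inE => /andP [rR /eqP cr] ->.
    split.
      apply/andP; split.
        have : t r \in ~: Y by rewrite -himg; apply: imset_f.
        by rewrite inE.
      by rewrite -cr; apply: (subsetP (sub_cl r)); apply: tin.
    by apply/existsP; exists r; rewrite rR eqxx cr eqxx.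
apply: card_in_imset.
move=> r1 r2; rewrite !inE => /andP [r1R _] /andP [r2R _]; exact: tinj.
Qed.

Lemma sum_beta (F : {set A}) : closedR R F ->
  (\sum_(G : {set A} | closedR R G && (G \subset F)) betaR R t Y G)%N = #|Rin R F|.
Proof.
move=> cF.
have -> : #|Rin R F| = (\sum_(r : {set A} | (r \in R) && (r \subset F)) 1)%N.
  by rewrite sum1dep_card /Rin.
rewrite [RHS](partition_big (fun r => clR R r) (fun G => closedR R G && (G \subset F))).
  apply: eq_bigr => G /andP [cG GF].
  rewrite beta_card -sum1dep_card.
  apply: eq_bigl => r; case rR: (r \in R) => //=.
  case E: (clR R r == G); rewrite ?andbF ?andbT //.
  move/eqP: E => E; apply/esym; apply: subset_trans (sub_cl r) _; by rewrite E.
move=> r /andP [rR rF]; rewrite cl_closed /=; exact: cl_sub.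
Qed.

End Aux.

Theorem mainTheorem5 (A : finType) (R : {set {set A}}) (t : {set A} -> A)
    (Y : {set A}) :
  in_C R ->
  transversalR R t ->
  [set t r | r in R] = ~: Y ->
  forall F : {set A}, closedR R F -> (betaR R t Y F)%:Z = alphaR R F.
Proof.
move=> _ [tinj tin] himg F.
have key : forall n (F : {set A}), (#|F| < n)%N -> closedR R F ->
    (betaR R t Y F)%:Z = alphaR R F.
  elim=> [|n IH] F' // hn cF.
  have hs := sum_beta tinj tin himg cF.
  rewrite (bigD1 F') /= in hs; last by rewrite cF subxx.
  have hd := closed_delta cF.
  move: hd; rewrite /delta -hs => hd.
  rewrite alpha_rec.
  have -> : \sum_(G : {set A} | closedR R G && (G \proper F')) alphaR R G
     = ((\sum_(G : {set A} | (closedR R G && (G \subset F')) && (G != F')) betaR R t Y G)%N)%:Z.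
    rewrite (big_morph Posz PoszD (erefl _)).
    apply: eq_big => G.
      by rewrite properEneq andbA; case: (closedR R G); rewrite //= andbC.
    move=> /andP [cG GpF]; symmetry; apply: IH => //.
    have := proper_card GpF; lia.
  rewrite PoszD in hd.
  move: hd; move: (\sum_(i | closedR R i && (i \subset F') && (i != F')) betaR R t Y i)%N => S hd; lia.
by move=> cF; apply: (key #|F|.+1).
Qed.
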